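(* Let $\Theta$ be a set of trajectory parameters, and for each iteration $j\ge 1$ let $g^j$ be a learned residual dynamics and $\theta^j\in\Theta$ the parameter returned by Bayesian optimization at iteration $j$. Suppose: (i) $\|g^j-g^*\|_\infty\le\epsilon^j$ with $\epsilon^j\to0$ as $j\to\infty$; and (ii) for each $j$, $J_{g^j}(\theta^j)\le\min_{\theta\in\Theta}J_{g^j}(\theta)+\delta(N_{BO})$, where $\delta(N_{BO})$ is a finite suboptimality bound depending on the number $N_{BO}$ of Bayesian optimization evaluations. Suppose moreover that, for every $j$ and every $\theta\in\Theta$, $|J_{g^j}(\theta)-J_{g^*}(\theta)|\le C^j\epsilon^j$ with constants $C^j>0$ that are bounded in $j$. Then, with $J^*=\min_{\theta\in\Theta}J_{g^*}(\theta)$, \[ \limsup_{j\to\infty}J_{g^*}(\theta^j)\le J^*+\delta(N_{BO}). \]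
   Context: $g^*$ denotes the true residual vehicle dynamics (the discrepancy between the true dynamics and a known nominal vehicle model), and $g^j$ the residual dynamics learned at iteration $j$ of an iterative learning scheme. For a residual $g$ and a trajectory parameter $\theta\in\Theta$, $J_g(\theta)$ is the lap time obtained by tracking the trajectory encoded by $\theta$ with a feedback controller in a closed-loop simulation of the vehicle under the nominal dynamics plus residual $g$; thus $J_{g^*}(\theta)$ is the true lap time and $J_{g^j}(\theta)$ the lap time evaluated under the learned model. The minima over $\Theta$ are assumed to exist. The uniform bound $|J_{g^j}-J_{g^*}|\le C^j\epsilon^j$ is the paper's Proposition 1, invoked in the statement of this theorem. *)

(* Defs.v *)
From HB Require Import structures.
From mathcomp Require Import all_boot all_order all_algebra.
From mathcomp Require Import all_classical all_reals all_analysis.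
Set Implicit Arguments. Unset Strict Implicit. Unset Printing Implicit Defensive.
Import Order.TTheory GRing.Theory Num.Theory.
Import numFieldNormedType.Exports.
Local Open Scope ring_scope.

Definition supnorm_le (R : realType) (S : Type) (V : normedModType R)
  (g h : S -> V) (e : R) : Prop := forall x, `|g x - h x| <= e.

Definition is_argmin (R : realType) (Theta : Type) (f : Theta -> R)
  (theta_min : Theta) : Prop := forall theta, f theta_min <= f theta.

(* Main.v *)
Require Import Defs.
From HB Require Import structures.
From mathcomp Require Import all_boot all_order all_algebra.
From mathcomp Require Import all_classical all_reals all_analysis.
From mathcomp Require Import lra.
Import Order.TTheory GRing.Theory Num.Theory.
Import numFieldNormedType.Exports.
Local Open Scope classical_set_scope.
Local Open Scope ring_scope.

Theorem theorem1 (R : realType) (S : Type) (V : normedModType R) (Theta : Type)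
  (J : (S -> V) -> Theta -> R)
  (gstar : S -> V) (g : nat -> S -> V) (theta : nat -> Theta)
  (eps : nat -> R) (C : nat -> R) (delta : nat -> R) (N_BO : nat)
  (thmin : nat -> Theta) (thstar : Theta) :
  (forall j, is_argmin (J (g j)) (thmin j)) ->
  is_argmin (J gstar) thstar ->
  (forall j, supnorm_le (g j) gstar (eps j)) ->
  (eps @ \oo --> (0:R)) ->
  (forall j, J (g j) (theta j) <= J (g j) (thmin j) + delta N_BO) ->
  (forall j, 0 < C j) ->
  (exists M : R, forall j, C j <= M) ->
  (forall j th, `|J (g j) th - J gstar th| <= C j * eps j) ->
  (limn_esup (fun j => (J gstar (theta j))%:E) <= (J gstar thstar + delta N_BO)%:E)%E.
Proof.
move=> Hmin Hstar _ Heps Hbo HC [M HM] Hb.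
set a := J gstar thstar + delta N_BO.
have eps0 j : 0 <= eps j.
  have := normr_ge0 (J (g j) thstar - J gstar thstar).
  move=> h; have := le_trans h (Hb j thstar).
  by rewrite pmulr_rge0.
have M0 : 0 < M by apply: lt_le_trans (HC 0%N) (HM 0%N).
have bound j : J gstar (theta j) <= a + 2 * M * eps j.
  have := Hb j (theta j); rewrite ler_norml => /andP[h1 h2].
  have := Hb j thstar; rewrite ler_norml => /andP[h3 h4].
  have h5 := Hmin j thstar.
  have h6 := Hbo j.
  have h7 : C j * eps j <= M * eps j by apply: ler_wpM2r.
  rewrite /a; lra.
apply/lee_addgt0Pr => e e0.
have e2 : 0 < e / (2 * M) by apply: divr_gt0 => //; rewrite mulr_gt0.
move/cvgrPdist_lt: Heps => /(_ _ e2) [N _ HN].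
rewrite /limn_esup /limf_esup.
apply: (@le_trans _ _ (ereal_sup ((fun j => (J gstar (theta j))%:E) @` [set k | (N <= k)%N]))).
  apply: ereal_inf_lbound; exists [set k | (N <= k)%N]; last by []. exists N; first by []. by [].

rewrite -EFinD; apply: ge_ereal_sup; move=> _ [k Nk <-].
rewrite lee_fin; apply: (le_trans (bound k)).
have := HN k Nk; rewrite /= sub0r normrN ger0_norm // => hk.
rewrite lerD2l -ler_pdivlMl ?mulr_gt0 // mulrC; exact: ltW.
Qed.
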